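(* For $b\in[0,1]$ and an integer $n\ge1$ define $b_n=\max\big(b,\tfrac{1}{n}\lceil (n-1)b\rceil\big)$. Then: (1) $b=b_n$ if and only if $\{nb\}\le b$; (2) $b\le b_n\le b+\tfrac1n$; (3) $\lfloor b\rfloor+\lceil (n-1)b_{n-1}\rceil\le nb_n$ for $n\ge1$.
   Context: $\{x\}=x-\lfloor x\rfloor$ denotes the fractional part of a real number $x$. *)

(* Defs.v *)
From mathcomp Require Import all_boot all_order all_algebra.
Set Implicit Arguments. Unset Strict Implicit. Unset Printing Implicit Defensive.
Import Order.TTheory GRing.Theory Num.Theory.
Local Open Scope ring_scope.

Definition fracpart {R : archiRealFieldType} (x : R) : R := x - (Num.floor x)%:~R.

(* Defined for every n : nat; for n = 0
   MathComp's convention 0^-1 = 0 gives b_0 = max(b,0), which only ever appears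
   multiplied by (n-1) = 0 in item (3) with n = 1. *)
Definition bn {R : archiRealFieldType} (b : R) (n : nat) : R :=
  Num.max b (n%:R^-1 * (Num.ceil (n.-1%:R * b))%:~R).

(* Main.v *)
Require Import Defs.
From mathcomp Require Import all_boot all_order all_algebra.
From mathcomp Require Import reals.
From mathcomp Require Import lra.
Import Order.TTheory GRing.Theory Num.Theory.
Local Open Scope ring_scope.

Lemma maxge (R : realType) (b x : R) : x <= Num.max b x /\ b <= Num.max b x.
Proof. by rewrite !le_max !lexx ?orbT. Qed.

Lemma maxgeM (R : realType) (N b x : R) : 0 <= N ->
  N * x <= N * Num.max b x /\ N * b <= N * Num.max b x.
Proof. by move=> N0; split; apply: ler_wpM2l => //; rewrite le_max lexx ?orbT. Qed.

Theorem lemma1p1 (R : realType) (b : R) (n : nat) :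
  0 <= b <= 1 -> (1 <= n)%N ->
  [/\ (b = bn b n <-> fracpart (n%:R * b) <= b),
      b <= bn b n <= b + n%:R^-1
    & (Num.floor b)%:~R + (Num.ceil (n.-1%:R * bn b n.-1))%:~R <= n%:R * bn b n].
Proof.
move=> /andP[b0 b1]; case: n => // n _.
have Hn : (n.+1%:R : R) = n%:R + 1 by rewrite -natr1.
have n0 : (0 : R) <= n%:R by rewrite ler0n.
rewrite /bn /= /fracpart.
set c := Num.ceil (n%:R * b).
have hc1 : (c%:~R : R) < n%:R * b + 1.
  by have := ceilB1_lt (n%:R * b); rewrite intrB /=; lra.
have hc2 : n%:R * b <= (c%:~R : R) by exact: ceil_ge.
have Np : (0 : R) < n.+1%:R by rewrite ltr0n.
have NV : (n.+1%:R : R) * n.+1%:R^-1 = 1 by rewrite divff // gt_eqF.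
have NVp : (0 : R) < n.+1%:R^-1 by rewrite invr_gt0.
split.
- have key : (n.+1%:R^-1 * c%:~R <= b) <-> (n.+1%:R * b - (Num.floor (n.+1%:R * b))%:~R <= b).
    rewrite ler_pdivrMl //.
    have -> : (c%:~R <= n.+1%:R * b) = (c <= Num.floor (n.+1%:R * b)) by rewrite floor_ge_int.
    rewrite ceil_le_int.
    set m := ((Num.floor (n.+1%:R * b))%:~R : R).
    rewrite Hn; split => h; lra.
  rewrite -key; split.
  + move=> E; apply: (@le_trans _ _ (Num.max b (n.+1%:R^-1 * c%:~R))).
      by rewrite le_max lexx orbT.
    by rewrite -E.
  + move=> h; by rewrite max_l.
- apply/andP; split; first by rewrite le_max lexx.
  rewrite ge_max; apply/andP; split.
    by rewrite lerDl ltW.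
  rewrite ler_pdivrMl // mulrDr NV Hn; lra.
- have Ec : c = Num.ceil (n%:R * b) by [].
  clear Np NVp; case: n Hn n0 c hc1 hc2 NV Ec => [|k] Hn n0 c hc1 hc2 NV Ec.
  + rewrite !mul0r ceil0 /= mul1r invr1 mul1r addr0.
    by apply: le_trans (floor_le b) _; rewrite le_max lexx.
  + set d := Num.ceil (k%:R * b).
    have dc : d <= c.
      rewrite Ec; apply: le_ceil; apply: ler_wpM2r => //; by rewrite ler_nat.
    have MP : (0 : R) < k.+1%:R by rewrite ltr0n.
    have MV : (k.+1%:R : R) * k.+1%:R^-1 = 1 by rewrite divff // gt_eqF.
    have -> : Num.ceil (k.+1%:R * Num.max b (k.+1%:R^-1 * d%:~R)) = c.
      set y := (X in Num.max b X).
      have [h|h] := leP b y.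
        transitivity (Num.ceil (k.+1%:R * y)); first by do 2 f_equal; exact: max_r h.
        rewrite /y mulrA MV mul1r intrKceil.
        apply/eqP; rewrite eq_le dc /= Ec ceil_le_int.
        by move: h; rewrite ler_pdivlMl.
      rewrite Ec; do 2 f_equal; exact: max_l (ltW h).
    have RHS : (c%:~R : R) <= k.+2%:R * Num.max b (k.+2%:R^-1 * c%:~R).
      apply: (@le_trans _ _ (k.+2%:R * (k.+2%:R^-1 * c%:~R))).
        by rewrite mulrA NV mul1r.
      exact: (proj1 (@maxgeM R _ b _ (ler0n R k.+2))).
    have [hb|hb] := ltP b 1.
      have : (Num.floor b) <= 0 by rewrite floor_le0.
      rewrite -(ler_int R) => hf; lra.
    have be : b = 1 by apply/eqP; rewrite eq_le b1 hb.
    have cM : c <= (k.+1)%:Z.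
      by rewrite Ec ceil_le_int be mulr1.
    have cM' : (c%:~R : R) <= k.+1%:R by move: cM; rewrite -(ler_int R).
    have : k.+2%:R * b <= k.+2%:R * Num.max b (k.+2%:R^-1 * c%:~R).
      exact: (proj2 (@maxgeM R _ b _ (ler0n R k.+2))).
    rewrite be floor1 mulr1; lra.
Qed.
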